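(* Let $(x,b)$ be a \textsc{Set Radius Strip Cover} instance whose optimal lifetime $T$ is positive. Then there is an optimal radial assignment $\rho$ (with lifetime $T$) that is proper, i.e. (1) $\rho_i\in\{0,b_i/T\}$ for every $i$, and (2) for every active sensor $i$ (one with $\rho_i>0$) there is a point $u_i\in[0,1]$ with $u_i\in[x_i-\rho_i,x_i+\rho_i]$ and $u_i\notin[x_k-\rho_k,x_k+\rho_k]$ for every active $k\ne i$.
   Context: \textsc{Set Radius Strip Cover}: An instance is a pair $(x,b)$, where $x=(x_1,\ldots,x_n)\in[0,1]^n$ with $x_1\le\cdots\le x_n$ are sensor locations and $b=(b_1,\ldots,b_n)$, $b_i\ge0$ rational, are battery charges. A solution is a radial assignment $\rho\in[0,\infty)^n$; all sensors are activated at time $0$. Sensor $i$ with $\rho_i>0$ (an active sensor) covers $[x_i-\rho_i,x_i+\rho_i]$ during $[0,b_i/\rho_i]$; a sensor with $\rho_i=0$ is inactive. The lifetime of $\rho$ is the maximum $T$ such that for every $t\in[0,T]$, $[0,1]\subseteq\bigcup_{i:\rho_i>0,\ b_i/\rho_i\ge t}[x_i-\rho_i,x_i+\rho_i]$. An assignment is optimal if it maximizes the lifetime. *)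

(* Defs.v *)
From HB Require Import structures.
From mathcomp Require Import all_boot all_order all_algebra.
From mathcomp Require Import reals.
Set Implicit Arguments. Unset Strict Implicit. Unset Printing Implicit Defensive.
Import Order.TTheory GRing.Theory Num.Theory.
Local Open Scope ring_scope.

Section SRSC.
Variables (R : realType) (n : nat).

Definition srsc_instance (x : 'I_n -> R) (b : 'I_n -> rat) : Prop :=
  (forall i, 0 <= x i <= 1) /\
  (forall i j : 'I_n, (i <= j)%N -> x i <= x j) /\
  (forall i, 0 <= b i).

Definition radial_assignment (rho : 'I_n -> R) : Prop := forall i, 0 <= rho i.

(* At time t, [0,1] is covered by the active sensors still alive at t. *)
Definition covers_at (x : 'I_n -> R) (b : 'I_n -> rat) (rho : 'I_n -> R) (t : R)
  : Prop :=
  forall y : R, 0 <= y <= 1 ->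
    exists i, 0 < rho i /\ t <= ratr (b i) / rho i /\
              x i - rho i <= y <= x i + rho i.

Definition covers_upto x b rho (T : R) : Prop :=
  forall t, 0 <= t <= T -> covers_at x b rho t.

Definition is_lifetime x b rho (T : R) : Prop :=
  0 <= T /\ covers_upto x b rho T /\
  (forall T', 0 <= T' -> covers_upto x b rho T' -> T' <= T).

Definition is_optimal_lifetime x b (T : R) : Prop :=
  (exists rho, radial_assignment rho /\ is_lifetime x b rho T) /\
  (forall rho T', radial_assignment rho -> is_lifetime x b rho T' -> T' <= T).

Definition proper_assignment (x : 'I_n -> R) (b : 'I_n -> rat) (rho : 'I_n -> R) (T : R) : Prop :=
  (forall i, rho i = 0 \/ rho i = ratr (b i) / T) /\
  (forall i, 0 < rho i ->
     exists u : R, 0 <= u <= 1 /\ x i - rho i <= u <= x i + rho i /\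
       forall k, k != i -> 0 < rho k -> ~ (x k - rho k <= u <= x k + rho k)).

End SRSC.

(* Main.v *)
Require Import Defs.
From HB Require Import structures.
From mathcomp Require Import all_boot all_order all_algebra.
From mathcomp Require Import reals.
From mathcomp Require Import ring lra.
From Stdlib Require Import Classical.
Import Order.TTheory GRing.Theory Num.Theory.
Local Open Scope ring_scope.

Section Aux.
Variables (R : realType) (n : nat) (x : 'I_n -> R) (b : 'I_n -> rat) (T : R).

Definition cov (S : {set 'I_n}) := forall y : R, 0 <= y <= 1 ->
  exists i, i \in S /\ x i - ratr (b i) / T <= y <= x i + ratr (b i) / T.

Lemma minimal_cover k : forall S : {set 'I_n}, #|S| = k -> cov S ->
  exists S' : {set 'I_n}, S' \subset S /\ cov S' /\ forall i, i \in S' -> ~ cov (S' :\ i).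
Proof.
move=> S HS; have Hm : (#|S| <= k)%N by rewrite HS.
elim: k S {HS} Hm => [|k IH] S Hm HC.
  exists S; split => //; split => // i Hi.
  move: Hm; rewrite leqn0 => /eqP /cards0_eq HS0.
  by rewrite HS0 inE in Hi.
case: (classic (exists i, i \in S /\ cov (S :\ i))) => [[i [Hi Hc]]|Hno].
  have Hcard : (#|S :\ i| <= k)%N.
    have := cardsD1 i S; rewrite Hi => E.
    move: Hm; rewrite E add1n ltnS //.
  have [S' [HS' [Hc' Hm']]] := IH (S :\ i) Hcard Hc.
  exists S'; split; last by split.
  apply: subset_trans HS' _; exact: subsetDl.
exists S; split => //; split => // i Hi Hc; apply: Hno; by exists i.
Qed.
End Aux.

Theorem lemma10 (R : realType) (n : nat) (x : 'I_n -> R) (b : 'I_n -> rat)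
  (T : R) :
  srsc_instance x b -> is_optimal_lifetime x b T -> 0 < T ->
  exists rho : 'I_n -> R,
    radial_assignment rho /\ is_lifetime x b rho T /\ proper_assignment x b rho T.
Proof.
move=> [_ [_ Hb]] [[rho0 [hr0 [_ [hcov0 _]]]] _] HT.
have Hbr : forall i, 0 <= ratr (b i) :> R by move=> i; rewrite ler0q.
set A := [set i | (0 < rho0 i) && (T * rho0 i <= ratr (b i))].
have HA : @cov R n x b T A.
  move=> y Hy.
  have HT' : 0 <= T <= T by rewrite lexx ltW.
  have [i [Hp [Ht Hi]]] := hcov0 T HT' y Hy.
  have H1 : T * rho0 i <= ratr (b i) by move: Ht; rewrite ler_pdivlMr.
  have H2 : rho0 i <= ratr (b i) / T by rewrite ler_pdivlMr // mulrC.
  exists i; split; first by rewrite inE Hp H1.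
  move/andP: Hi => [Hi1 Hi2]; apply/andP; split; lra.
have [S [HSA [HSc HSm]]] := @minimal_cover R n x b T _ A (erefl #|A|) HA.
have Hpos : forall i, i \in S -> 0 < ratr (b i) / T :> R.
  move=> i /(subsetP HSA); rewrite inE => /andP [H1 H2].
  apply: divr_gt0 => //.
  apply: lt_le_trans H2; exact: mulr_gt0.
pose rho i := if i \in S then ratr (b i) / T else 0 : R.
have Hrho : forall i, 0 < rho i -> i \in S.
  by move=> i; rewrite /rho; case: (i \in S) => //; rewrite ltxx.
have HrhoS : forall i, i \in S -> rho i = ratr (b i) / T by move=> i; rewrite /rho => ->.
have Hdiv : forall i, i \in S -> ratr (b i) / rho i = T.
  move=> i Hi; rewrite HrhoS //.
  have := Hpos i Hi => Hp.
  have Hb0 : ratr (b i) != 0 :> R.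
    apply/negP => /eqP E; move: Hp; by rewrite E mul0r ltxx.
  field; apply/andP; split => //; exact: lt0r_neq0.
exists rho; split.
  by move=> i; rewrite /rho; case: ifP => // Hi; apply: ltW; apply: Hpos.
split.
  split; first exact: ltW.
  split.
    move=> t /andP [Ht0 Ht] y Hy.
    have [i [Hi Hc]] := HSc y Hy.
    exists i; rewrite Hdiv // HrhoS //; split; first exact: Hpos.
    by split.
  move=> T' HT'0 Hc.
  have H01 : 0 <= (0:R) <= 1 by rewrite lexx ler01.
  have HT'' : 0 <= T' <= T' by rewrite lexx HT'0.
  have [i [Hp [Ht _]]] := Hc T' HT'' 0 H01.
  by rewrite -(Hdiv i (Hrho i Hp)).
split.
  by move=> i; rewrite /rho; case: ifP; [right|left].
move=> i Hp; have Hi := Hrho i Hp.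
have Hnc := HSm i Hi.
have [y [Hy Hny]] : exists y : R, 0 <= y <= 1 /\ forall k, k \in S :\ i ->
    ~ (x k - ratr (b k) / T <= y <= x k + ratr (b k) / T).
  apply: NNPP => Hn; apply: Hnc => y Hy.
  apply: NNPP => Hn2; apply: Hn; exists y; split => // k Hk Hk2; apply: Hn2.
  by exists k.
have [j [Hj Hcj]] := HSc y Hy.
have Eji : j = i.
  apply: NNPP => Hne; apply: (Hny j) => //.
  by rewrite !inE Hj andbT; apply/eqP.
subst j.
exists y; split => //; split; first by rewrite HrhoS.
move=> k Hk Hpk; have HkS := Hrho k Hpk; rewrite HrhoS //.
apply: Hny; by rewrite !inE Hk HkS.
Qed.
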